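(* There exists no generalized matching mechanism that is resolute, symmetric and Pareto optimal.
   Context: Fix $n\ge 2$, $W=\{1,\dots,n\}$ (women), $M=\{n+1,\dots,2n\}$ (men), $I=W\cup M$. Permutations compose right-to-left. A generalized preference profile is a function $\bar p$ on $I$ assigning to each $x\in W$ a linear order $\bar p(x)$ on $M\cup\{x\}$ and to each $y\in M$ a linear order $\bar p(y)$ on $W\cup\{y\}$ (being ranked oneself means being unmatched); $\overline{\mathcal{P}}$ is the set of these. A generalized matching is a permutation $\bar\mu$ of $I$ such that for $x\in W$, $\bar\mu(x)\ne x$ implies $\bar\mu(x)\in M$; for $y\in M$, $\bar\mu(y)\neq y$ implies $\bar\mu(y)\in W$; and $\bar\mu(\bar\mu(z))=z$ for all $z$; $\overline{\mathcal{M}}$ is the set of these. $\bar\mu$ is Pareto optimal for $\bar p$ if there is no $\bar\mu'\in\overline{\mathcal{M}}$ with $\bar\mu'(z)\succeq_{\bar p(z)}\bar\mu(z)$ for all $z\in I$ and $\bar\mu'(z^* )\succ_{\bar p(z^* )}\bar\mu(z^* )$ for some $z^*$. Let $G^*=\{\varphi\in\mathrm{Sym}(I):\{\varphi(W),\varphi(M)\}=\{W,M\}\}$. For a linear order $R$ on $X\subseteq I$ and $\varphi\in\mathrm{Sym}(I)$, $\varphi R$ is the relation on $\varphi(X)$ with $(a,b)\in\varphi R$ iff $(\varphi^{-1}(a),\varphi^{-1}(b))\in R$. For $\varphi\in G^*$, $\bar p^\varphi(z)=\varphi\,\bar p(\varphi^{-1}(z))$; for a permutation $\mu$, $\mu^\varphi=\varphi\mu\varphi^{-1}$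 and $S^\varphi=\{\mu^\varphi:\mu\in S\}$. A generalized matching mechanism is a correspondence $F$ from $\overline{\mathcal{P}}$ to $\overline{\mathcal{M}}$; it is resolute if $|F(\bar p)|=1$ for all $\bar p$; Pareto optimal if all elements of $F(\bar p)$ are Pareto optimal for $\bar p$, for all $\bar p$; symmetric if $F(\bar p^\varphi)=F(\bar p)^\varphi$ for all $\bar p\in\overline{\mathcal{P}}$, $\varphi\in G^*$. *)

(* Defs.v *)
From mathcomp Require Import all_boot all_fingroup.
Set Implicit Arguments. Unset Strict Implicit. Unset Printing Implicit Defensive.

(* Agents: I = 'I_(2n) (0-indexed).  Women W = {i | i < n} (paper's 1..n),
   men M = {i | n <= i} (paper's n+1..2n). *)
Notation agent n := ('I_(2 * n)).

Definition women (n : nat) : {set agent n} := [set i : agent n | i < n].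
Definition men (n : nat) : {set agent n} := [set i : agent n | n <= i].

(* A (weak-order-style) linear order on X is the set R of pairs (a,b) with
   "a is ranked at least as high as b": reflexive on X, antisymmetric,
   transitive and total on X, with field exactly X. *)
Definition linear_order_on (T : finType) (X : {set T}) (R : {set T * T}) : Prop :=
  [/\ R \subset setX X X,
      forall a, a \in X -> (a, a) \in R,
      forall a b, (a, b) \in R -> (b, a) \in R -> a = b,
      forall a b c, (a, b) \in R -> (b, c) \in R -> (a, c) \in R
    & forall a b, a \in X -> b \in X -> ((a, b) \in R \/ (b, a) \in R)].

Definition weakly_pref (T : finType) (R : {set T * T}) (a b : T) := (a, b) \in R.
Definition strictly_pref (T : finType) (R : {set T * T}) (a b : T) :=
  (a, b) \in R /\ a <> b.

Definition profile (n : nat) := {ffun agent n -> {set agent n * agent n}}.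

Definition gen_profile (n : nat) (p : profile n) : Prop :=
  forall z : agent n,
    (z \in women n -> linear_order_on (z |: men n) (p z)) /\
    (z \in men n -> linear_order_on (z |: women n) (p z)).

Definition gen_matching (n : nat) (mu : {perm agent n}) : Prop :=
  [/\ forall x, x \in women n -> mu x != x -> mu x \in men n,
      forall y, y \in men n -> mu y != y -> mu y \in women n
    & forall z, mu (mu z) = z].

Definition pareto_optimal (n : nat) (p : profile n) (mu : {perm agent n}) : Prop :=
  ~ exists mu' : {perm agent n},
      [/\ gen_matching mu',
          forall z, weakly_pref (p z) (mu' z) (mu z)
        & exists zs, strictly_pref (p zs) (mu' zs) (mu zs)].

Definition Gstar (n : nat) (phi : {perm agent n}) : Prop :=
  (phi @: women n = women n /\ phi @: men n = men n) \/
  (phi @: women n = men n /\ phi @: men n = women n).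

Definition rel_act (n : nat) (phi : {perm agent n}) (R : {set agent n * agent n})
  : {set agent n * agent n} :=
  [set (phi ab.1, phi ab.2) | ab in R].

Definition profile_act (n : nat) (p : profile n) (phi : {perm agent n}) : profile n :=
  [ffun z => rel_act phi (p ((phi^-1)%g z))].

(* mu^phi = phi o mu o phi^-1 (right-to-left composition), i.e. the map
   x |-> phi (mu (phi^-1 x)).  In MathComp, (s * t)%g x = t (s x), so this is
   (phi^-1 * mu * phi)%g. *)
Definition match_act (n : nat) (mu phi : {perm agent n}) : {perm agent n} :=
  (phi^-1 * mu * phi)%g.

Definition mechanism (n : nat) := profile n -> {set {perm agent n}}.

Definition is_gen_mechanism (n : nat) (F : mechanism n) : Prop :=
  forall p, gen_profile p -> forall mu, mu \in F p -> gen_matching mu.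

Definition resolute (n : nat) (F : mechanism n) : Prop :=
  forall p, gen_profile p -> #|F p| = 1.

Definition pareto_mech (n : nat) (F : mechanism n) : Prop :=
  forall p, gen_profile p -> forall mu, mu \in F p -> pareto_optimal p mu.

Definition symmetric_mech (n : nat) (F : mechanism n) : Prop :=
  forall p phi, gen_profile p -> Gstar phi ->
    F (profile_act p phi) = [set match_act mu phi | mu in F p].

(* Main.v *)
Require Import Defs.
From mathcomp Require Import all_boot all_fingroup all_algebra.
From mathcomp Require Import zify.
Set Implicit Arguments. Unset Strict Implicit. Unset Printing Implicit Defensive.
Import GRing.Theory.

Section S.
Variable n : nat.
Hypothesis hn : 2 <= n.

Local Notation N := (2 * n).
Local Notation ZN := ('Z_(2 * n)).

Lemma N_gt1 : 1 < N. Proof. lia. Qed.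

Definition pnat (x : agent n) : nat := if x < n then 2 * x else (2 * (x - n)).+1.
Definition pos (x : agent n) : ZN := ((pnat x)%:R)%R.

Lemma pnat_lt x : pnat x < N.
Proof. have := ltn_ord x; rewrite /pnat; case: ifP => h; lia. Qed.

Lemma val_pos x : pos x = pnat x :> nat.
Proof. by rewrite /pos (val_Zp_nat N_gt1) modn_small // pnat_lt. Qed.

Lemma pos_inj : injective pos.
Proof.
move=> x y /(congr1 (@nat_of_ord _)); rewrite !val_pos /pnat => h; apply: val_inj => /=.
have := ltn_ord x; have := ltn_ord y.
move: h; case: ifP; case: ifP => /= *; lia.
Qed.

Definition phi_nat (x : agent n) : nat :=
  if x < n then x + n else if x - n + 1 < n then x - n + 1 else 0.

Lemma phi_lt x : phi_nat x < N.
Proof. have := ltn_ord x; rewrite /phi_nat; case: ifP => h; [lia|case: ifP => h2; lia]. Qed.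

Definition phi_fun (x : agent n) : agent n := Ordinal (phi_lt x).

Lemma NZ0 : (N%:R : ZN)%R = 0%R.
Proof. by apply: val_inj; rewrite /= (val_Zp_nat N_gt1) modnn. Qed.

Lemma pos_phi_fun x : pos (phi_fun x) = (pos x + 1)%R.
Proof.
rewrite /pos natr1 /pnat /= /phi_nat; have := ltn_ord x.
case: (ltnP x n) => hx hlt /=.
  rewrite (_ : (x + n < n) = false); last by lia.
  congr (_%:R)%R; lia.
case: (ltnP (x - n + 1) n) => h2 /=.
  rewrite h2; congr (_%:R)%R; lia.
rewrite (_ : 0 < n) /=; last by lia. rewrite muln0. have -> : (2 * (x - n)).+2 = N by lia.
by rewrite NZ0.
Qed.

Lemma phi_inj : injective phi_fun.
Proof. by move=> x y /(congr1 pos); rewrite !pos_phi_fun => /addIr /pos_inj. Qed.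

Definition phi : {perm agent n} := perm phi_inj.

Lemma pos_phi x : pos (phi x) = (pos x + 1)%R.
Proof. by rewrite permE pos_phi_fun. Qed.

Lemma side_phi x : (phi x < n) = ~~ (x < n).
Proof.
rewrite permE /= /phi_nat; have := ltn_ord x.
case: ifP => hx /= hlt; first lia.
case: ifP => h2 /=; lia.
Qed.


Definition X (y : agent n) : {set agent n} := [set x | (x == y) || ((x < n) != (y < n))].
Definition cN : ZN := (n%:R)%R.
Definition sc (z x : agent n) : nat :=
  if x == z then 0 else (nat_of_ord (pos x - pos z + cN)%R).+1.
Definition prel z : {set agent n * agent n} :=
  [set ab | [&& ab.1 \in X z, ab.2 \in X z & sc z ab.2 <= sc z ab.1]].
Lemma prelE z u v : ((u, v) \in prel z) = [&& u \in X z, v \in X z & sc z v <= sc z u].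
Proof. by rewrite /prel in_set. Qed.

Definition prof : profile n := [ffun z => prel z].

Lemma sc_inj z : injective (sc z).
Proof.
move=> x y; rewrite /sc; case: eqP => [->|hx]; case: eqP => [->|hy] //.
move=> /eqP; rewrite eqSS => /eqP h; apply: pos_inj; apply: (addIr (- pos z)%R); apply: (addIr cN). exact: val_inj h.
Qed.

Lemma lo z : linear_order_on (X z) (prel z).
Proof.
split.
- by apply/subsetP => -[u v]; rewrite !inE /= => /and3P[-> -> _].
- by move=> a ha; rewrite inE /=; apply/and3P; split.
- move=> a b; rewrite !inE /= => /and3P[_ _ h1] /and3P[_ _ h2].
  by apply: (@sc_inj z); apply/eqP; rewrite eqn_leq h1 h2.
- move=> a b c; rewrite !inE /= => /and3P[h3 _ h1] /and3P[_ h4 h2] /=.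
  by apply/and3P; split => //; exact: leq_trans h2 h1.
- move=> a b ha hb; rewrite !inE /= in ha hb *; rewrite ha hb /=.
  case: (leqP (sc z b) (sc z a)) => h; [left|right]; by [] || exact: ltnW.
Qed.

Lemma gp : gen_profile prof.
Proof.
move=> z; rewrite ffunE; split=> hz.
- have -> : z |: men n = X z.
    apply/setP => x; move: hz; rewrite !inE => hz; rewrite hz leqNgt.
    by case: (x < n).
  exact: lo.
- have -> : z |: women n = X z.
    apply/setP => x; move: hz; rewrite !inE leqNgt => /negbTE hz; rewrite hz.
    by case: (x < n).
  exact: lo.
Qed.

Lemma X_phi x y : (phi x \in X (phi y)) = (x \in X y).
Proof. by rewrite !inE (inj_eq (@perm_inj _ phi)) !side_phi; case: (x < n); case: (y < n). Qed.

Lemma sc_phi y x : sc (phi y) (phi x) = sc y x.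
Proof.
rewrite /sc (inj_eq (@perm_inj _ phi)) !pos_phi.
by rewrite opprD addrACA subrr addr0.
Qed.

Lemma prel_phi y : rel_act phi (prel y) = prel (phi y).
Proof.
apply/setP => -[u v]; apply/imsetP/idP.
- move=> [[a b]]; rewrite prelE => /and3P[ha hb h] [-> ->].
  by rewrite prelE !X_phi !sc_phi ha hb h.
- rewrite prelE => /and3P[hu hv h].
  exists ((phi^-1)%g u, (phi^-1)%g v); last by rewrite /= !permKV.
  rewrite prelE -(X_phi ((phi^-1)%g u)) -(X_phi ((phi^-1)%g v)) -!(sc_phi y).
  by rewrite !permKV hu hv h.
Qed.

Lemma prof_fix : profile_act prof phi = prof.
Proof.
apply/ffunP => z; rewrite !ffunE prel_phi permKV; done.
Qed.

Lemma gstar : Gstar phi.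
Proof.
right; split; apply/setP => y; apply/imsetP/idP.
- by move=> [x]; rewrite !inE => hx ->; rewrite leqNgt side_phi hx.
- rewrite inE => hy; exists ((phi^-1)%g y); last by rewrite permKV.
  by rewrite inE -[_ < n]negbK -side_phi permKV -leqNgt.
- by move=> [x]; rewrite !inE => hx ->; rewrite side_phi -leqNgt.
- rewrite inE => hy; exists ((phi^-1)%g y); last by rewrite permKV.
  by rewrite inE leqNgt -side_phi permKV.
Qed.


Lemma N_gt0 : 0 < N. Proof. lia. Qed.
Definition w0 : agent n := Ordinal N_gt0.

Lemma pos_w0 : pos w0 = 0%R.
Proof. by rewrite /pos /pnat /= (_ : 0 < n) //; lia. Qed.

Lemma w0_side : w0 < n. Proof. rewrite /=; lia. Qed.

Lemma val0 : ((0%R : ZN) : nat) = 0. Proof. by []. Qed.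
Lemma val1 : ((1%R : ZN) : nat) = 1. Proof. by []. Qed.
Lemma valcN : (cN : nat) = n.
Proof. by rewrite /cN (val_Zp_nat N_gt1) modn_small //; lia. Qed.
Lemma valcN1 : ((cN + 1)%R : nat) = n.+1.
Proof. by rewrite /cN natr1 (val_Zp_nat N_gt1) modn_small //; lia. Qed.

Lemma cN2 : (cN + cN = 0)%R.
Proof. by rewrite /cN -natrD (_ : n + n = N) ?NZ0 //; lia. Qed.

Lemma half_cN (u : ZN) : u != 0%R -> (u + u = 0)%R -> u = cN.
Proof.
move=> hu0 huu.
have hlt : (u : nat) < N by apply: leq_trans (ltn_ord u) _; rewrite Zp_cast // N_gt1.
have hv : (u : nat) != 0 by apply: contra hu0 => h; apply/eqP/val_inj; rewrite /= (eqP h).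
have := congr1 (@nat_of_ord _) huu.
rewrite -[u in (u + _)%R]natr_Zp -[u in (_ + u)%R]natr_Zp -natrD (val_Zp_nat N_gt1) val0 => hm.
have := divn_eq (u + u) N; rewrite hm addn0.
set q := (_ %/ _) => hq.
apply: val_inj; rewrite /= valcN.
case: q hq => [|[|q]] hq; nia.
Qed.

Definition Xmem_ok (m : {perm agent n}) := forall x, m x = x \/ (m x < n) = ~~ (x < n).

Lemma gm_side (m : {perm agent n}) : gen_matching m -> Xmem_ok m.
Proof.
case=> hw hm _ x; case: (eqVneq (m x) x) => h; first by left.
right; case: (ltnP x n) => hx.
  by have := hw x; rewrite !inE hx => /(_ isT h); rewrite leqNgt => /negbTE.
by have := hm x; rewrite !inE hx => /(_ isT h).
Qed.

Lemma mk_gm (m : {perm agent n}) : (forall z, m (m z) = z) -> Xmem_ok m -> gen_matching m.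
Proof.
move=> hi hs; split=> // x; rewrite !inE => hx hne; case: (hs x) => h;
  (try by rewrite h eqxx in hne).
- by rewrite leqNgt h hx.
- by rewrite h -leqNgt hx.
Qed.

Lemma Xmu (m : {perm agent n}) z : gen_matching m -> m z \in X z.
Proof.
move=> /gm_side /(_ z); rewrite inE; case=> [->|->]; first by rewrite eqxx.
by case: (z < n); rewrite orbT.
Qed.

Lemma sc_self z : sc z z = 0. Proof. by rewrite /sc eqxx. Qed.
Lemma sc_pos z x : x != z -> 0 < sc z x. Proof. by rewrite /sc => /negbTE ->. Qed.
Lemma sc_one z x : x != z -> (pos x - pos z + cN = 0)%R -> sc z x = 1.
Proof. by rewrite /sc => /negbTE -> ->. Qed.

Lemma not_po (mu mu' : {perm agent n}) : gen_matching mu -> gen_matching mu' ->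
  (forall z, mu' z = mu z \/ (mu' z != z /\ sc z (mu z) <= 1)) ->
  mu' w0 != mu w0 -> ~ pareto_optimal prof mu.
Proof.
move=> gm gm' H hne; apply.
have wk : forall z, weakly_pref (prof z) (mu' z) (mu z).
  move=> z; rewrite /weakly_pref ffunE prelE !Xmu //=.
  case: (H z) => [->|[h1 h2]]; first exact: leqnn.
  exact: leq_trans h2 (sc_pos h1).
exists mu'; split => //; exists w0; split; [exact: wk | exact/eqP].
Qed.

Lemma comm (mu : {perm agent n}) : mu = match_act mu phi -> forall y, mu (phi y) = phi (mu y).
Proof. by move=> E y; rewrite {1}E /match_act !permM permK. Qed.

Lemma commk (mu : {perm agent n}) : mu = match_act mu phi -> forall k y, mu ((phi ^+ k)%g y) = (phi ^+ k)%g (mu y).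
Proof.
move=> E; elim=> [|k IH] y; first by rewrite !expg0 !perm1.
by rewrite expgSr !permM comm // IH.
Qed.

Lemma posk k y : pos ((phi ^+ k)%g y) = (pos y + k%:R)%R.
Proof.
elim: k => [|k IH]; first by rewrite expg0 perm1 addr0.
by rewrite expgSr permM pos_phi IH -natr1 addrA.
Qed.

Lemma no_fixed_po (mu : {perm agent n}) : gen_matching mu -> mu = match_act mu phi -> ~ pareto_optimal prof mu.
Proof.
move=> gm E.
have inv : forall z, mu (mu z) = z by case: gm.
have gs := gm_side gm.
set m0 := phi w0.
have pm0 : pos m0 = 1%R by rewrite pos_phi pos_w0 add0r.
have w0m0 : w0 != m0.
  apply/eqP => /(congr1 pos); rewrite pm0 pos_w0 => /(congr1 (@nat_of_ord _)).
  by rewrite val0 val1.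
case: (eqVneq (mu w0) w0) => h0.
- have hm0 : mu m0 = m0 by rewrite comm // h0.
  pose mu' := (mu * tperm w0 m0)%g.
  have mu'E x : mu' x = tperm w0 m0 (mu x) by rewrite permM.
  have oth x : x != w0 -> x != m0 -> mu' x = mu x.
    move=> h1 h2; rewrite mu'E tpermD //.
      by apply: contra h1 => /eqP h; rewrite -[x]inv -h h0.
    by apply: contra h2 => /eqP h; rewrite -[x]inv -h hm0.
  have e1 : mu' w0 = m0 by rewrite mu'E h0 tpermL.
  have e2 : mu' m0 = w0 by rewrite mu'E hm0 tpermR.
  have gm' : gen_matching mu'.
    apply: mk_gm.
      move=> z; case: (eqVneq z w0) => [->|h1]; first by rewrite e1 e2.
      case: (eqVneq z m0) => [->|h2]; first by rewrite e2 e1.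
      rewrite (oth _ h1 h2) oth ?inv //.
        by apply: contra h1 => /eqP h; rewrite -[z]inv h h0.
      by apply: contra h2 => /eqP h; rewrite -[z]inv h hm0.
    move=> z; case: (eqVneq z w0) => [->|h1].
      by right; rewrite e1 side_phi.
    case: (eqVneq z m0) => [->|h2].
      by right; rewrite e2 side_phi negbK.
    by rewrite oth //; exact: gs.
  apply: (not_po gm gm').
    move=> z; case: (eqVneq z w0) => [->|h1].
      by right; rewrite e1 h0 sc_self eq_sym w0m0.
    case: (eqVneq z m0) => [->|h2].
      by right; rewrite e2 hm0 sc_self w0m0.
    by left; rewrite oth.
  by rewrite e1 h0 eq_sym.
- set a := mu w0.
  set t := nat_of_ord (pos a).
  have hat : (phi ^+ t)%g w0 = a.
    by apply: pos_inj; rewrite posk pos_w0 add0r /t natr_Zp.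
  have hmua : mu a = w0 by rewrite /a inv.
  have haa : (pos a + pos a = 0)%R.
    have := commk E t w0; rewrite hat hmua -/a => /(congr1 pos).
    by rewrite posk pos_w0 /t natr_Zp => <-.
  have pa : pos a = cN.
    apply: half_cN => //; apply: contra h0 => /eqP h.
    by apply/eqP; apply: pos_inj; rewrite -/a h pos_w0.
  set b := phi a.
  have pb : pos b = (cN + 1)%R by rewrite pos_phi pa.
  have hm0 : mu m0 = b by rewrite comm // -/a.
  have hmb : mu b = m0 by rewrite -hm0 inv.
  have neqv : forall x y : agent n, (pos x : nat) != pos y -> x != y.
    by move=> x y; apply: contra => /eqP ->.
  have am0 : a != m0 by apply: neqv; rewrite pa pm0 valcN val1; lia.
  have ba : b != a by apply: neqv; rewrite pa pb valcN valcN1; lia.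
  have bm0 : b != m0 by apply: neqv; rewrite pm0 pb val1 valcN1; lia.
  have w0a : w0 != a by rewrite eq_sym.
  have aw0 : a != w0 by [].
  have m0w0 : m0 != w0 by rewrite eq_sym.
  have ab : a != b by rewrite eq_sym.
  have m0b : m0 != b by rewrite eq_sym.
  have m0a : m0 != a by rewrite eq_sym.
  pose tau := tperm a m0.
  pose mu' := (tau * mu * tau)%g.
  have mu'E x : mu' x = tau (mu (tau x)) by rewrite !permM.
  have e1 : mu' w0 = m0 by rewrite mu'E /tau (tpermD (z := w0)) // -/a tpermL.
  have e2 : mu' m0 = w0 by rewrite mu'E /tau tpermR hmua tpermD // eq_sym.
  have e3 : mu' a = b by rewrite mu'E /tau tpermL hm0 tpermD // eq_sym.
  have e4 : mu' b = a by rewrite mu'E /tau (tpermD (z := b)) // hmb tpermR.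
  have oth x : x != w0 -> x != m0 -> x != a -> x != b -> mu' x = mu x.
    move=> h1 h2 h3 h4.
    have n1 : a != mu x by apply/eqP => h; move/eqP: h1; apply; rewrite -[x]inv -h hmua.
    have n2 : m0 != mu x by apply/eqP => h; move/eqP: h4; apply; rewrite -[x]inv -h hm0.
    by rewrite mu'E /tau (tpermD (z := x)) 1?eq_sym // tpermD.
  have gm' : gen_matching mu'.
    apply: mk_gm.
      by move=> z; rewrite !mu'E tpermK inv tpermK.
    move=> z; case: (eqVneq z w0) => [->|h1].
      by right; rewrite e1 side_phi.
    case: (eqVneq z m0) => [->|h2].
      by right; rewrite e2 side_phi negbK.
    case: (eqVneq z a) => [->|h3].
      by right; rewrite e3 side_phi.
    case: (eqVneq z b) => [->|h4].
      by right; rewrite e4 side_phi negbK.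
    by rewrite oth //; exact: gs.
  apply: (not_po gm gm').
    move=> z; case: (eqVneq z w0) => [->|h1].
      right; rewrite e1 eq_sym w0m0 sc_one //.
      by rewrite pa pos_w0 subr0 cN2.
    case: (eqVneq z m0) => [->|h2].
      right; rewrite e2 w0m0 hm0 sc_one //.
      by rewrite pb pm0 addrK cN2.
    case: (eqVneq z a) => [->|h3].
      right; rewrite e3 ba hmua sc_one //.
      by rewrite pa pos_w0 sub0r addNr.
    case: (eqVneq z b) => [->|h4].
      right; rewrite e4 eq_sym ba hmb sc_one //.
      by rewrite pb pm0 (addrC cN) opprD addrA subrr sub0r addNr.
    by left; rewrite oth.
  by rewrite e1 -/a eq_sym.
Qed.

Lemma main : ~ exists F : mechanism n,
      [/\ is_gen_mechanism F, resolute F, symmetric_mech F & pareto_mech F].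
Proof.
move=> [F [hg hr hs hp]].
have /eqP/cards1P [mu hmu] := hr _ gp.
have := hs prof phi gp gstar; rewrite prof_fix hmu imset_set1 => /set1_inj E.
have hin : mu \in F prof by rewrite hmu set11.
exact: (no_fixed_po (hg _ gp _ hin) E (hp _ gp _ hin)).
Qed.

End S.

Theorem theorem9 (n : nat) (hn : 2 <= n) :
  ~ exists F : mechanism n,
      [/\ is_gen_mechanism F, resolute F, symmetric_mech F & pareto_mech F].
Proof. exact: (main hn). Qed.
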